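(* Under the setting below, for every $k\in\{1,\dots,p-1\}$, $$\mathsf v_n^{2k}=\frac{(-1)^k\,(v_n^{2p}\kappa_n^{2p}+1)}{p\,\kappa_n^{2k}(\kappa_n^2-\kappa_n^{-2})}\sum_{a=0}^{p-1}q^{-k(2a-1)}\beta_{a,n}.$$ Moreover, $\beta_{k,n}=\mathsf u_n^k\alpha_{0,n}\mathsf u_n^{1-k}$, and hence, using the known reconstruction identities below, $$\beta_{k,n}=\mathsf U_n\Big[\big(\mathsf B^{-1}(\mu_{n,+})\mathsf A(\mu_{n,+})\big)^k\,\mathsf A^{-1}(\mu_{n,-})\mathsf B(\mu_{n,-})\,\big(\mathsf B^{-1}(\mu_{n,+})\mathsf A(\mu_{n,+})\big)^{1-k}\Big]\mathsf U_n^{-1}.$$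
   Context: Let $p\ge3$ be odd, $q\in\mathbb C$ with $q^p=1$ and $q^2$ a primitive $p$-th root of unity, $q^{1/2}$ a fixed square root with $(q^{1/2})^2=q$. At site $n$ of a chain of $\mathsf N$ sites, $\mathsf u_n,\mathsf v_n$ are invertible operators on $\mathbb C^p$ (tensored with identity elsewhere) with $\mathsf u_n\mathsf v_n=q\mathsf v_n\mathsf u_n$, $\mathsf u_n^p=u_n^p\,\mathrm{Id}$, $\mathsf v_n^p=v_n^p\,\mathrm{Id}$ for nonzero scalars $u_n,v_n$; operators at different sites commute. Let $\kappa_n\ne0$ with $\kappa_n^4\ne1$ and $v_n^{2p}\kappa_n^{2p}\ne-1$. Define $\beta_{k,n}=(q^{2k-1}\mathsf v_n^2+\kappa_n^2)(q^{2k-1}\mathsf v_n^2\kappa_n^2+1)^{-1}$ for $k\in\mathbb Z$, and $\alpha_{0,n}=(q^{-1}\mathsf v_n^2+\kappa_n^2)(q^{-1}\mathsf v_n^2\kappa_n^2+1)^{-1}\mathsf u_n^{-1}$. For the second part: the Lax matrix is $\mathsf L_n(\lambda)=\kappa_n\begin{pmatrix}\mathsf u_n(q^{-1/2}\mathsf v_n\kappa_n+q^{1/2}\mathsf v_n^{-1}\kappa_n^{-1})&(\lambda_n\mathsf v_n-(\mathsf v_n\lambda_n)^{-1})/i\\(\lambda_n/\mathsf v_n-\mathsf v_n/\lambda_n)/i&\mathsf u_n^{-1}(q^{1/2}\mathsf v_n\kappa_n^{-1}+q^{-1/2}\mathsf v_n^{-1}\kappa_n)\end{pmatrix}$, $\lambda_n=\lambda/\xi_n$,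 and $\mathsf L_{\mathsf N}(\lambda)\cdots\mathsf L_1(\lambda)=\begin{pmatrix}\mathsf A(\lambda)&\mathsf B(\lambda)\\ \mathsf C(\lambda)&\mathsf D(\lambda)\end{pmatrix}$. Set $\mu_{n,\pm}=i\kappa_n^{\pm1}q^{1/2}\xi_n$. $\mathsf U_n$ is an invertible operator with $\mathsf U_n\mathsf L_{\mathsf N}(\lambda)\cdots\mathsf L_1(\lambda)\mathsf U_n^{-1}=\mathsf L_{n-1}(\lambda)\cdots\mathsf L_1(\lambda)\mathsf L_{\mathsf N}(\lambda)\cdots\mathsf L_n(\lambda)$. Assume $\mathsf B(\mu_{n,+})$ and $\mathsf A(\mu_{n,-})$ are invertible. Known identities (Oota): $\mathsf u_n=\mathsf U_n\mathsf B^{-1}(\mu_{n,+})\mathsf A(\mu_{n,+})\mathsf U_n^{-1}$ and $\alpha_{0,n}=\mathsf U_n\mathsf A^{-1}(\mu_{n,-})\mathsf B(\mu_{n,-})\mathsf U_n^{-1}$. *)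

(* Defs.v *)
(* Operators are modelled as elements of an abstract
   unital algebra R over algC (the algebraic complex numbers). *)
From HB Require Import structures.
From mathcomp Require Import all_boot all_order all_algebra all_field.
Set Implicit Arguments. Unset Strict Implicit. Unset Printing Implicit Defensive.
Import Order.TTheory GRing.Theory Num.Theory.
Local Open Scope ring_scope.

Definition mx2 {T : Type} (a b c d : T) : 'M[T]_2 :=
  \matrix_(i < 2, j < 2)
    if (i == 0 :> nat) then (if (j == 0 :> nat) then a else b)
    else (if (j == 0 :> nat) then c else d).

Definition i0 : 'I_2 := @ord0 1.
Definition i1 : 'I_2 := @ord_max 1.

Section Chain.
Variable R : unitAlgType algC.

Definition beta (q kap : algC) (v : R) (k : int) : R :=
  (q ^ (2 * k - 1) *: v ^+ 2 + (kap ^+ 2)%:A)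
  * (q ^ (2 * k - 1) *: (v ^+ 2) * (kap ^+ 2)%:A + 1)^-1.

Definition alpha0 (q kap : algC) (u v : R) : R :=
  (q^-1 *: v ^+ 2 + (kap ^+ 2)%:A)
  * (q^-1 *: (v ^+ 2) * (kap ^+ 2)%:A + 1)^-1 * u^-1.

(* Lax matrix L_n(lambda), with lam_n = lambda / xi_n and qh = q^{1/2} *)
Definition Lax (qh kap xi lam : algC) (u v : R) : 'M[R]_2 :=
  let ln := lam / xi in
  mx2 (kap *: (u * ((qh^-1 * kap) *: v + (qh * kap^-1) *: v^-1)))
      (kap *: ('i^-1 *: (ln *: v - (v * ln%:A)^-1)))
      (kap *: ('i^-1 *: (ln *: v^-1 - ln^-1 *: v)))
      (kap *: (u^-1 * ((qh * kap^-1) *: v + (qh^-1 * kap) *: v^-1))).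

Definition prodL (L : nat -> 'M[R]_2) (s : seq nat) : 'M[R]_2 :=
  \prod_(i <- s) L i.

Definition monodromy (L : nat -> 'M[R]_2) (N : nat) : 'M[R]_2 :=
  prodL L (rev (iota 1 N)).

(* cyclically shifted product L_{n-1} ... L_1 L_N ... L_n *)
Definition monodromy_shift (L : nat -> 'M[R]_2) (N n : nat) : 'M[R]_2 :=
  prodL L (rev (iota 1 n.-1) ++ rev (iota n (N - n).+1)).

Definition conjop (U : R) (M : 'M[R]_2) : 'M[R]_2 :=
  map_mx (fun x => U * x * U^-1) M.

End Chain.

(* Main.v *)
Require Import Defs.
From HB Require Import structures.
From mathcomp Require Import all_boot all_order all_algebra all_field.
From mathcomp Require Import ring zify.
Import Order.TTheory GRing.Theory Num.Theory.
Local Open Scope ring_scope.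

Lemma q_neq0 (q : algC) p : (0 < p)%N -> q^+p = 1 -> q != 0.
Proof. by move=> Hp Hq; apply/eqP=> E; move: Hq; rewrite E expr0n; case: p Hp => // p _ /= /eqP; rewrite eq_sym oner_eq0. Qed.

Lemma sa_pow (q : algC) p (a : nat) : (0 < p)%N -> odd p -> q^+p = 1 ->
  q ^ (2 * a%:Z - 1) = (q^+2)^+(a + p./2).
Proof.
move=> Hp Ho Hq.
have qu : q \is a GRing.unit by rewrite unitfE (q_neq0 _ _ Hp Hq).
rewrite exprzDr // exprN1.
have -> : 2 * a%:Z = (2 * a)%N%:Z by rewrite PoszM.
rewrite -exprnP -exprM mulnDr exprD.
congr (_ * _).
have Hp1 : (2 * p./2 = p.-1)%N.
  move: (odd_double_half p); rewrite Ho -mul2n => E; rewrite -{2}E; by [].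
rewrite Hp1; apply/eqP; rewrite eq_sym -(can_eq (mulfK (q_neq0 _ _ Hp Hq))).
by rewrite mulVf ?(q_neq0 _ _ Hp Hq) // -exprSr prednK // Hq.
Qed.

Lemma not_dvd_M p k j : (1 <= k <= p - 1)%N -> (j < p)%N -> j != k -> ~~ (p %| p - k + j)%N.
Proof.
move=> /andP[H1 H2] Hj Hjk; apply/negP => /dvdnP [t Ht].
move/eqP: Hjk => Hjk.
case: t Ht => [|[|t]] Ht; rewrite ?mul0n ?mul1n ?mulSn in Ht; lia.
Qed.

Lemma key_sum (q : algC) p (k j : nat) : (0 < p)%N -> odd p -> q^+p = 1 ->
  p.-primitive_root (q^+2) -> (1 <= k <= p - 1)%N -> (j < p)%N ->
  \sum_(a < p) q ^ (- (k%:Z * (2 * (a : nat)%:Z - 1))) * (q ^ (2 * (a : nat)%:Z - 1))^+j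
  = (j == k)%:R * p%:R.
Proof.
move=> Hp Ho Hq Hq2 Hk Hj.
set z := q^+2.
have Hz1 : z^+p = 1 := prim_expr_order Hq2.
set M := (p - k + j)%N.
have pw : forall a : 'I_p, q ^ (- (k%:Z * (2 * (a : nat)%:Z - 1))) * (q ^ (2 * (a : nat)%:Z - 1))^+j
   = (z^+M)^+a * (z^+(p./2))^+M.
  move=> a; rewrite [k%:Z * _]mulrC -invr_expz -exprz_exp -exprnP (sa_pow _ _ _ Hp Ho Hq).
  set s := z^+(a + p./2).
  have Hs1 : s^+p = 1 by rewrite /s exprAC Hz1 expr1n.
  have Hs0 : s^+k != 0 by rewrite expf_neq0 // (q_neq0 _ _ Hp Hs1).
  have E : s^+k * s^+(p-k) = 1.
    by rewrite -exprD subnKC ?Hs1 //; case/andP: Hk => _ /leq_trans; apply; apply: leq_subr.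
  have Einv : (s^+k)^-1 = s^+(p-k) by rewrite -[s^+(p-k)](mulKf Hs0) E mulr1.
  rewrite Einv -(exprD s) -/M /s (exprD z) exprMn (exprAC z) //.
rewrite (eq_bigr _ (fun a _ => pw a)) -mulr_suml.
case: eqP => [Ejk|/eqP Hjk].
  have HM : M = p by rewrite /M Ejk subnK //; case/andP: Hk => _ /leq_trans; apply; apply: leq_subr.
  rewrite HM Hz1 exprAC Hz1 expr1n mulr1 mul1r.
  under eq_bigr do rewrite expr1n.
  by rewrite sumr_const card_ord.
have Hx1 : (z^+M)^+p = 1 by rewrite exprAC Hz1 expr1n.
have Hxn1 : z^+M != 1 by rewrite -(prim_order_dvd Hq2) not_dvd_M.
have := subrX1 (z^+M) p; rewrite Hx1 subrr => /esym /eqP.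
by rewrite mulf_eq0 subr_eq0 (negbTE Hxn1) /= => /eqP ->; rewrite !mul0r.
Qed.
Section H.
Variable R : unitAlgType algC.

Lemma geom_tel (x : R) m : (1 - x) * \sum_(j<m) x^+j = 1 - x^+m.
Proof. by rewrite -opprB mulNr -subrX1 opprB. Qed.

Lemma unit_inv_eq (x y : R) : x * y = 1 -> y * x = 1 -> x \is a GRing.unit /\ x^-1 = y.
Proof.
move=> H1 H2; have ux : x \is a GRing.unit by apply/unitrP; exists y.
split=> //; by rewrite -[LHS]mulr1 -H1 mulrA mulVr // mul1r.
Qed.

Lemma inv1z (z : R) (c : algC) (p : nat) : odd p -> z^+p = c%:A -> c + 1 != 0 ->
  z + 1 \is a GRing.unit /\ (z+1)^-1 = (c+1)^-1 *: \sum_(j<p) (-z)^+j.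
Proof.
move=> Hp Hz Hc.
have HL : (z+1) * \sum_(j<p) (-z)^+j = (c+1)%:A.
  have := geom_tel (-z) p; rewrite opprK addrC => ->.
  by rewrite exprNn -signr_odd Hp expr1 Hz mulN1r opprK scalerDl scale1r addrC.
have Hcm : GRing.comm (z+1) (\sum_(j<p) (-z)^+j).
  apply: commr_sum => j _; apply: commrX.
  by rewrite /GRing.comm mulrDl mulrDr mulr1 mul1r mulNr mulrN.
apply: unit_inv_eq.
  by rewrite -scalerAr HL scalerA mulVf // scale1r.
by rewrite -scalerAl -Hcm HL scalerA mulVf // scale1r.
Qed.

Lemma frac_expand (p : nat) (w : R) (s K c : algC) : odd p -> K != 0 ->
  ((s*K) *: w)^+p = c%:A -> c + 1 != 0 ->
  (s *: w + K%:A) * ((s *: w) * K%:A + 1)^-1 =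
  K^-1%:A + \sum_(j<p) ((K - K^-1)/(c+1) * (- (s*K))^+j) *: w^+j.
Proof.
move=> Hp HK Hz Hc.
have [Hu Hi] := inv1z _ _ _ Hp Hz Hc.
have E1 : (s *: w) * K%:A = (s*K) *: w by rewrite mulr_algr scalerA mulrC.
have E2 : s *: w + K%:A = K^-1 *: ((s*K) *: w + 1) + (K - K^-1)%:A.
  rewrite scalerDr scalerA mulrCA mulVf // mulr1 scalerBl addrA.
  by rewrite addrAC addrK.
rewrite E1 E2 mulrDl -scalerAl mulrV // mulr_algl Hi scalerA.
congr (_ + _); rewrite scaler_sumr; apply: eq_bigr => j _.
by rewrite -scaleNr exprZn scalerA.
Qed.
End H.

Lemma part1 (R : unitAlgType algC) (p k : nat) (q : algC) (v : R) (vsn K0 : algC) :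
 (0 < p)%N -> odd p -> q^+p = 1 -> p.-primitive_root (q^+2) -> (1 <= k <= p - 1)%N ->
 v^+p = (vsn^+p)%:A -> K0 != 0 -> K0^+4 != 1 -> vsn ^+ (2 * p) * K0 ^+ (2 * p) != -1 ->
 v ^+ (2 * k) =
       ((-1) ^+ k * (vsn ^+ (2 * p) * K0 ^+ (2 * p) + 1)
        / (p%:R * K0 ^+ (2 * k) * (K0 ^+ 2 - (K0 ^+ 2)^-1)))
       *: \sum_(a < p) (q ^ (- (k%:Z * (2 * (a : nat)%:Z - 1))))
                          *: beta q K0 v (a : nat)%:Z.
Proof.
move=> Hp Ho Hq Hq2 Hk Hv HK0 Hk4 Hvk.
set K := K0^+2. set c := vsn ^+ (2 * p) * K0 ^+ (2 * p). set w := v^+2.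
set D := (K - K^-1) / (c + 1).
have Hc : c + 1 != 0 by rewrite addr_eq0.
have HK : K != 0 by rewrite expf_neq0.
have Hkp : (k < p)%N by case/andP: Hk => H1 H2; lia.
have Hw : forall a : nat, ((q ^ (2 * a%:Z - 1) * K) *: w)^+p = c%:A.
  move=> a; rewrite exprZn exprMn (sa_pow _ _ _ Hp Ho Hq) (exprAC (q^+2) (a + p./2) p) (prim_expr_order Hq2) expr1n mul1r.
  rewrite /w -(exprM v) mulnC (exprM v) Hv exprZn expr1n scalerA; congr (_ *: _).
  by rewrite /c /K -!exprM mulrC [(p * 2)%N]mulnC.
have Hb : forall a : 'I_p, beta q K0 v (a : nat)%:Z =
    K^-1%:A + \sum_(j<p) (D * (- (q ^ (2 * (a : nat)%:Z - 1) * K))^+j) *: w^+j.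
  by move=> a; rewrite /beta (frac_expand _ _ _ _ _ _ Ho HK (Hw a) Hc).
have Hsum : \sum_(a < p) (q ^ (- (k%:Z * (2 * (a : nat)%:Z - 1)))) *: beta q K0 v (a : nat)%:Z
    = (D * (-K)^+k * p%:R) *: w^+k.
  rewrite (eq_bigr _ (fun a _ => congr1 _ (Hb a))).
  under eq_bigr do rewrite scalerDr.
  rewrite big_split /= -scaler_suml.
  have H0 : \sum_(a < p) q ^ (- (k%:Z * (2 * (a : nat)%:Z - 1))) = 0.
    have E := key_sum q p k 0 Hp Ho Hq Hq2 Hk Hp.
    rewrite (_ : (0 == k)%N = false) ?mul0r in E; last by case/andP: Hk => H1 _; lia.
    by rewrite -[RHS]E; apply: eq_bigr => a _; rewrite expr0 mulr1.
  rewrite H0 scale0r add0r.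
  under eq_bigr do rewrite scaler_sumr.
  rewrite exchange_big /=.
  under eq_bigr do (under eq_bigr do rewrite scalerA; rewrite -scaler_suml).
  have Hi : forall j : 'I_p, \sum_(a < p) q ^ (- (k%:Z * (2 * (a : nat)%:Z - 1))) *
       (D * (- (q ^ (2 * (a : nat)%:Z - 1) * K)) ^+ j)
     = D * (-K)^+j * ((j == k :> nat)%:R * p%:R).
    move=> j; rewrite -(key_sum q p k j Hp Ho Hq Hq2 Hk (ltn_ord j)) mulr_sumr.
    by apply: eq_bigr => a _; rewrite -[- (_ * K)]mulrN exprMn; ring.
  rewrite (eq_bigr (fun j : 'I_p => (D * (-K)^+j * ((j == k :> nat)%:R * p%:R)) *: w^+j)); last first.
    by move=> j _; rewrite Hi.
  rewrite (bigD1 (Ordinal Hkp)) //= eqxx mul1r big1 ?addr0 // => j /eqP Hj.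
  have -> : (j == k :> nat) = false by apply/negbTE/eqP => E; apply: Hj; exact: val_inj.
  by rewrite mul0r mulr0 scale0r.
rewrite Hsum scalerA (exprM v 2 k) -/w.
suff -> : (-1) ^+ k * (c + 1) / (p%:R * K0 ^+ (2 * k) * (K - K^-1)) * (D * (- K) ^+ k * p%:R) = 1
  by rewrite scale1r.
have Hp0 : (p%:R : algC) != 0 by rewrite pnatr_eq0 -lt0n.
have HKK : K - K^-1 != 0.
  rewrite subr_eq0; apply: contra Hk4 => /eqP E.
  by rewrite -[4%N]/(2 + 2)%N exprD -/K {2}E mulfV.
have HKk : K^+k != 0 by rewrite expf_neq0.
rewrite exprM -/K (exprNn K) /D.
have P1 : (-1) ^+ k * (-1) ^+ k = 1 :> algC by rewrite -exprMn mulrNN mul1r expr1n.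
rewrite -[RHS]P1; field.
by rewrite Hc HK HKk Hp0 /= andbT subr_eq0 /K -exprD.
Qed.
Section C.
Variable R : unitAlgType algC.

Lemma conjM (g x y : R) : g \is a GRing.unit ->
  g * (x * y) * g^-1 = (g * x * g^-1) * (g * y * g^-1).
Proof. by move=> gu; rewrite !mulrA divrK. Qed.

Lemma conjV (g x : R) : g \is a GRing.unit -> g * x^-1 * g^-1 = (g * x * g^-1)^-1.
Proof.
move=> gu; case: (boolP (x \is a GRing.unit)) => xu.
  by rewrite !invrM ?unitrV ?unitrMl ?unitrMr // invrK mulrA.
have nu : g * x * g^-1 \isn't a GRing.unit.
  apply/negP => H; move/negP: xu; apply.
  have -> : x = g^-1 * (g * x * g^-1) * g by rewrite !mulrA mulVr // mul1r divrK.
  by rewrite unitrMl // unitrMr ?unitrV.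
by rewrite (invr_out xu) (invr_out nu).
Qed.

Lemma conjXz (g x : R) (k : int) : g \is a GRing.unit ->
  (g * x * g^-1) ^ k = g * x ^ k * g^-1.
Proof.
move=> gu.
have Hn : forall n : nat, (g * x * g^-1) ^+ n = g * x ^+ n * g^-1.
  elim=> [|n IH]; first by rewrite !expr0 mulr1 divrr.
  by rewrite !exprS IH -conjM.
case: k => n; first exact: Hn.
by rewrite NegzE -!invr_expz -!exprnP Hn conjV.
Qed.

Lemma conjF (g x : R) (a b : algC) : g \is a GRing.unit ->
  g * (a *: x + b%:A) * g^-1 = a *: (g * x * g^-1) + b%:A.
Proof.
move=> gu; rewrite mulrDr mulrDl -scalerAr -scalerAl -scalerAr -scalerAl.
by rewrite mulr1 divrr.
Qed.

Lemma conjF2 (g x : R) (a b : algC) : g \is a GRing.unit ->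
  g * ((a *: x) * b%:A + 1) * g^-1 = (a *: (g * x * g^-1)) * b%:A + 1.
Proof.
move=> gu; rewrite !mulr_algr !scalerA -[1]scale1r conjF //.
Qed.

Lemma comm_pow (u w : R) (c : algC) : u * w = c *: (w * u) ->
  forall n, u^+n * w = c^+n *: (w * u^+n).
Proof.
move=> H; elim=> [|n IH]; first by rewrite !expr0 mul1r mulr1 scale1r.
by rewrite exprS -mulrA IH -scalerAr [u * (w * _)]mulrA H -scalerAl scalerA -mulrA exprSr.
Qed.

Lemma comm_inv (u w : R) (c : algC) : u \is a GRing.unit -> c != 0 ->
  u * w = c *: (w * u) -> u^-1 * w = c^-1 *: (w * u^-1).
Proof.
move=> uu c0 H.
have : w * u^-1 = c *: (u^-1 * w).
  by rewrite -[w * u^-1](mulKr uu) [u * (w * _)]mulrA H -scalerAl mulrK // -scalerAr.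
by move=> ->; rewrite scalerA mulVf // scale1r.
Qed.

Lemma comm_powz (u w : R) (c : algC) (k : int) : u \is a GRing.unit -> c != 0 ->
  u * w = c *: (w * u) -> u ^ k * w = c ^ k *: (w * u ^ k).
Proof.
move=> uu c0 H; case: k => n; first exact: comm_pow.
rewrite NegzE -!exprz_inv -!exprnP; apply: comm_pow; exact: comm_inv.
Qed.

Lemma part2 (q K0 : algC) (u v : R) (k : int) : q != 0 -> u \is a GRing.unit ->
  u * v = q *: (v * u) -> beta q K0 v k = u ^ k * alpha0 q K0 u v * u ^ (1 - k).
Proof.
move=> q0 uu Huv.
set w := v ^+ 2.
have Hw : u * w = (q ^+ 2) *: (w * u).
  by rewrite /w !expr2 mulrA [u * v]Huv -scalerAl -[v * u * v]mulrA [u * v]Huv -scalerAr scalerA mulrA.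
have gu : u ^ k \is a GRing.unit by rewrite unitrXz.
have E1 : u^-1 * u ^ (1 - k) = (u ^ k)^-1.
  by rewrite invr_expz exprzDr // expr1z mulKr.
have Hc : u ^ k * w * (u ^ k)^-1 = (q ^+ 2) ^ k *: w.
  by rewrite (comm_powz _ _ _ _ uu _ Hw) -?scalerAl ?mulrK // expf_neq0.
have qu : q \is a GRing.unit by rewrite unitfE.
have Eq : q ^ (2 * k - 1) = q^-1 * (q ^+ 2) ^ k.
  by rewrite exprzDr // exprN1 mulrC exprnP exprz_exp.
rewrite /beta /alpha0 -/w.
set N := (q^-1 *: w + _). set D := (q^-1 *: w * _ + 1).
have -> : u ^ k * (N * D^-1 * u^-1) * u ^ (1 - k) = u ^ k * (N * D^-1) * (u ^ k)^-1.
  by rewrite -E1 !mulrA.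
rewrite conjM // conjV // /N /D conjF // conjF2 // Hc !scalerA Eq.
by [].
Qed.
End C.

Lemma part3 (R : unitAlgType algC) (U X Y u a b : R) (k : int) :
  U \is a GRing.unit -> u = U * X * U^-1 -> a = U * Y * U^-1 ->
  b = u ^ k * a * u ^ (1 - k) -> b = U * (X ^ k * Y * X ^ (1 - k)) * U^-1.
Proof.
move=> UU Hu Ha ->; rewrite Hu Ha !conjXz // -!conjM //.
Qed.

Theorem mainTheorem4
  (R : unitAlgType algC) (p N n : nat) (q qh : algC)
  (uu vv : nat -> R) (us vs kap xi : nat -> algC) (U : R)
  (* p odd, p >= 3; q^p = 1, q^2 primitive p-th root of unity, qh^2 = q *)
  (Hp3 : (3 <= p)%N) (Hpodd : odd p)
  (Hqp : q ^+ p = 1) (Hq2 : p.-primitive_root (q ^+ 2)) (Hqh : qh ^+ 2 = q)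
  (* chain of N sites, n is one of them *)
  (Hn : (1 <= n <= N)%N)
  (* site operators: Weyl relations, p-th powers scalar, invertible *)
  (Huu : forall m, (1 <= m <= N)%N -> uu m \is a GRing.unit)
  (Hvv : forall m, (1 <= m <= N)%N -> vv m \is a GRing.unit)
  (Hus : forall m, (1 <= m <= N)%N -> us m != 0)
  (Hvs : forall m, (1 <= m <= N)%N -> vs m != 0)
  (Huv : forall m, (1 <= m <= N)%N -> uu m * vv m = q *: (vv m * uu m))
  (Hup : forall m, (1 <= m <= N)%N -> uu m ^+ p = (us m ^+ p)%:A)
  (Hvp : forall m, (1 <= m <= N)%N -> vv m ^+ p = (vs m ^+ p)%:A)
  (* operators at different sites commute *)
  (Hcuu : forall m m', (1 <= m <= N)%N -> (1 <= m' <= N)%N -> m != m' ->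
            uu m * uu m' = uu m' * uu m)
  (Hcvv : forall m m', (1 <= m <= N)%N -> (1 <= m' <= N)%N -> m != m' ->
            vv m * vv m' = vv m' * vv m)
  (Hcuv : forall m m', (1 <= m <= N)%N -> (1 <= m' <= N)%N -> m != m' ->
            uu m * vv m' = vv m' * uu m)
  (* parameters *)
  (Hk0 : forall m, (1 <= m <= N)%N -> kap m != 0)
  (Hk4 : forall m, (1 <= m <= N)%N -> kap m ^+ 4 != 1)
  (Hvk : forall m, (1 <= m <= N)%N ->
           vs m ^+ (2 * p) * kap m ^+ (2 * p) != -1)
  (Hxi : forall m, (1 <= m <= N)%N -> xi m != 0)
  (* U_n conjugates the monodromy to the cyclically shifted product *)
  (HU : U \is a GRing.unit)
  (HUL : forall lam : algC,
     conjop U (monodromy (fun m => Lax qh (kap m) (xi m) lam (uu m) (vv m)) N)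
     = monodromy_shift (fun m => Lax qh (kap m) (xi m) lam (uu m) (vv m)) N n) :
  let L lam := monodromy (fun m => Lax qh (kap m) (xi m) lam (uu m) (vv m)) N in
  let A lam := L lam i0 i0 in
  let B lam := L lam i0 i1 in
  let mup := 'i * kap n * qh * xi n in
  let mum := 'i * (kap n)^-1 * qh * xi n in
  (* invertibility assumptions and Oota's reconstruction identities *)
  B mup \is a GRing.unit ->
  A mum \is a GRing.unit ->
  uu n = U * ((B mup)^-1 * A mup) * U^-1 ->
  alpha0 q (kap n) (uu n) (vv n) = U * ((A mum)^-1 * B mum) * U^-1 ->
  (forall k : nat, (1 <= k <= p - 1)%N ->
     vv n ^+ (2 * k) =
       ((-1) ^+ k * (vs n ^+ (2 * p) * kap n ^+ (2 * p) + 1)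
        / (p%:R * kap n ^+ (2 * k) * (kap n ^+ 2 - (kap n ^+ 2)^-1)))
       *: \sum_(a < p) (q ^ (- (k%:Z * (2 * (a : nat)%:Z - 1))))
                          *: beta q (kap n) (vv n) (a : nat)%:Z)
  /\ (forall k : int,
        beta q (kap n) (vv n) k
        = uu n ^ k * alpha0 q (kap n) (uu n) (vv n) * uu n ^ (1 - k))
  /\ (forall k : int,
        beta q (kap n) (vv n) k
        = U * (((B mup)^-1 * A mup) ^ k * ((A mum)^-1 * B mum)
               * ((B mup)^-1 * A mup) ^ (1 - k)) * U^-1).

Proof.
move=> L A B mup mum HB HA Hu Ha.
have Hp0 : (0 < p)%N by apply: leq_trans Hp3.
have q0 : q != 0 := q_neq0 _ _ Hp0 Hqp.
have P2 : forall k : int,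
    beta q (kap n) (vv n) k = uu n ^ k * alpha0 q (kap n) (uu n) (vv n) * uu n ^ (1 - k).
  by move=> k; apply: part2 => //; [exact: Huu | exact: Huv].
split; last split => //.
  move=> k Hk; apply: part1 => //.
  - exact: Hvp.
  - exact: Hk0.
  - exact: Hk4.
  - exact: Hvk.
move=> k; exact: (@part3 _ _ _ _ _ _ _ _ HU Hu Ha (P2 k)).
Qed.
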